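(* Let $K$ be a knot. (a) If $\mathcal{H}(K)$ is supported in a single $\Delta$-grading, then $K$ is $d_1$-standard. (b) Suppose $\mathcal{H}(K)$ is supported in two neighboring $\Delta$-gradings $\Delta$ and $\Delta+2$, and $$\max\{a:\mathcal{H}^{a,\Delta+2}\neq0\}-4<\min\{a:\mathcal{H}^{a,\Delta}\ne0\}.$$ Then $K$ is $d_1$-standard.
   Context: For a knot $K$, $\mathcal{H}(K)$ is reduced triply graded (HOMFLY-PT) Khovanov–Rozansky homology over $\mathbb{Q}$, a finite-dimensional space graded by $(q,a,t)$; $\Delta=q+a+t$, and $\mathcal{H}^{a,\Delta}$ denotes the part of $\mathcal{H}(K)$ in $a$-degree $a$ and $\Delta$-grading $\Delta$. By Rasmussen, there is a spectral sequence (the $\mathfrak{sl}(1)$ spectral sequence) with first page $\mathcal{H}(K)$ whose $i$-th differential $d_1^{(i)}$ changes degrees by $(q,a,t)\mapsto(q+2i,a-2i,t+2-2i)$ (so it changes $\Delta$ by $2-2i$), converging to a one-dimensional space. A knot is called $d_1$-standard if all higher differentials $d_1^{(i)}$, $i\ge2$, of this spectral sequence vanish. *)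

(* Defs.v *)
From HB Require Import structures.
From mathcomp Require Import all_boot all_order all_algebra.
Set Implicit Arguments. Unset Strict Implicit. Unset Printing Implicit Defensive.
Import Order.TTheory GRing.Theory Num.Theory.
Local Open Scope ring_scope.

(* Abstract model of Rasmussen's sl(1) spectral sequence on the reduced
   HOMFLY-PT homology H(K) of a knot K.
   Page i (i >= 1) is a triply graded finite-dimensional Q-vector space,
   described in each tri-degree (q,a,t) by its dimension [E i q a t];
   page 1 is H(K).  The i-th differential d^(i) on page i maps degree
   (q,a,t) to (q+2i, a-2i, t+2-2i), given as a rat-matrix (row vectors). *)
Record sl1_spectral_sequence := SL1SS {
  E : nat -> int -> int -> int -> nat;
  d : forall (i : nat) (q a t : int),
        'M[rat]_(E i q a t,
                 E i (q + 2 * i%:Z) (a - 2 * i%:Z) (t + 2 - 2 * i%:Z));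
  dd0 : forall (i : nat) (q a t : int),
        d i q a t *m d i (q + 2 * i%:Z) (a - 2 * i%:Z) (t + 2 - 2 * i%:Z) = 0;
  (* E_{i+1} = ker d^(i) / im d^(i) in each tri-degree *)
  next_page : forall (i : nat) (q a t : int), (1 <= i)%N ->
        E i.+1 q a t =
          (E i q a t - \rank (d i q a t)
             - \rank (d i (q - 2 * i%:Z) (a + 2 * i%:Z) (t - 2 + 2 * i%:Z)))%N;
  fin_supp : exists s : seq (int * int * int),
        forall q a t, (q, a, t) \notin s -> E 1 q a t = 0%N;
  converges : exists N : nat, exists g : int * int * int,
        forall i, (N <= i)%N -> forall q a t,
          E i q a t = (if (q, a, t) == g then 1 else 0)%N
}.

Definition delta (q a t : int) : int := q + a + t.

Definition H_nonzero (S : sl1_spectral_sequence) (a D : int) : Prop :=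
  exists q t : int, delta q a t = D /\ E S 1 q a t <> 0%N.

Definition d1_standard (S : sl1_spectral_sequence) : Prop :=
  forall (i : nat) (q a t : int), (2 <= i)%N -> d S i q a t = 0.

(* Main.v *)
Require Import Defs.
From HB Require Import structures.
From mathcomp Require Import all_boot all_order all_algebra.
From mathcomp Require Import zify.
Import Order.TTheory GRing.Theory Num.Theory.
Local Open Scope ring_scope.

Lemma mx_rows0 (m n : nat) (M : 'M[rat]_(m, n)) : m = 0%N -> M = 0.
Proof. move=> Hm; apply/matrixP => i j; exfalso; have := ltn_ord i; move: (nat_of_ord i) => x; by rewrite Hm. Qed.

Lemma mx_cols0 (m n : nat) (M : 'M[rat]_(m, n)) : n = 0%N -> M = 0.
Proof. move=> Hm; apply/matrixP => i j; exfalso; have := ltn_ord j; move: (nat_of_ord j) => x; by rewrite Hm. Qed.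

Lemma E_le (S : sl1_spectral_sequence) (k : nat) q a t :
  (E S k.+1 q a t <= E S 1 q a t)%N.
Proof.
elim: k => [//|k IH].
rewrite (next_page S q a t (ltn0Sn k)).
apply: leq_trans IH; rewrite -subnDA; exact: leq_subr.
Qed.

Lemma key (S : sl1_spectral_sequence) :
  (forall (i : nat) q a t, (2 <= i)%N -> E S 1 q a t <> 0%N ->
     E S 1 (q + 2 * i%:Z) (a - 2 * i%:Z) (t + 2 - 2 * i%:Z) <> 0%N -> False) ->
  d1_standard S.
Proof.
move=> H i q a t Hi.
case: i Hi H => [//|k] Hi H.
have [H1|H1] := eqVneq (E S k.+1 q a t) 0%N; first exact: mx_rows0.
have [H2|H2] := eqVneq (E S k.+1 (q + 2 * k.+1%:Z) (a - 2 * k.+1%:Z) (t + 2 - 2 * k.+1%:Z)) 0%N;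
  first exact: mx_cols0.
exfalso; apply: (H k.+1 q a t Hi).
- by move=> E0; move: (E_le S k q a t); rewrite E0 leqn0; apply/negP.
- by move=> E0; move: (E_le S k (q + 2 * k.+1%:Z) (a - 2 * k.+1%:Z) (t + 2 - 2 * k.+1%:Z)); rewrite E0 leqn0; apply/negP.
Qed.

Theorem lemma2p15 (S : sl1_spectral_sequence) :
  ((exists D : int, forall q a t : int,
       E S 1 q a t <> 0%N -> delta q a t = D) ->
     d1_standard S)
  /\
  (forall D : int,
     (forall q a t : int,
        E S 1 q a t <> 0%N -> delta q a t = D \/ delta q a t = D + 2) ->
     (exists a, H_nonzero S a D) ->
     (exists a, H_nonzero S a (D + 2)) ->
     (forall a1 a2 : int,
        H_nonzero S a1 (D + 2) -> H_nonzero S a2 D -> a1 - 4 < a2) ->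
     d1_standard S).
Proof.
split.
  move=> [D HD]; apply: key => i q a t Hi H1 H2.
  move: (HD _ _ _ H1) (HD _ _ _ H2); rewrite /delta => e1 e2.
  lia.
move=> D HD _ _ Ha; apply: key => i q a t Hi H1 H2.
have Hs := HD _ _ _ H1; have Ht := HD _ _ _ H2.
move: Hs Ht; rewrite /delta => Hs Ht.
have Hq : q + a + t = D + 2 by lia.
have Hq2 : q + 2 * i%:Z + (a - 2 * i%:Z) + (t + 2 - 2 * i%:Z) = D by lia.
have Hi2 : i%:Z = 2 by lia.
have := Ha a (a - 2 * i%:Z).
have X : H_nonzero S a (D + 2) by exists q, t.
have Y : H_nonzero S (a - 2 * i%:Z) D by exists (q + 2 * i%:Z), (t + 2 - 2 * i%:Z).
move=> /(_ X Y). rewrite Hi2. lia.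
Qed.
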